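(* Assume $\det D_{m,0}\neq 0$ and $\det Z_1\neq 0$. Then, as $\epsilon\to 0$, \begin{align*} \det\beta_{m+2}=&\epsilon^{-r}\begin{vmatrix} -mS_D(\beta_m)_1^{-1}& mS_D(\beta_m)^{-1}_1B_{m,1}D_{m,0}^{-1}+B_{m-1,0} \\ mD_{m,0}^{-1}C_{m,0}S_D(\beta_m)_1^{-1}&(m+1)Z_{1}^{-1}-mD_{m,0}^{-1} -mD_{m,0}^{-1}C_{m,0}S_{D}(\beta_m)_{1}^{-1}B_{m,1}D_{m,0}^{-1} +D_{m-1,0} \end{vmatrix}+O(\epsilon^{-r+1}). \end{align*}
   Context: Consider the matrix discrete Painlev\'e I equation $\beta_{n+1}=n\beta_{n}^{-1}-\beta_{n-1}-\beta_{n}-\alpha$, $n=1,2,\ldots$, with $\beta_n,\alpha\in\mathbb{C}^{N\times N}$. Fix $r\in\{1,\dots,N-1\}$ and $m\geq 2$, and write every $N\times N$ matrix in blocks $\begin{pmatrix} A & B\\ C & D\end{pmatrix}$ with $A\in\mathbb{C}^{r\times r}$, $B\in\mathbb{C}^{r\times(N-r)}$, $C\in\mathbb{C}^{(N-r)\times r}$, $D\in\mathbb{C}^{(N-r)\times(N-r)}$. The initial data depend on a small parameter $\epsilon\to0$ as $\beta_{m-1}=\sum_{i\geq 0}\begin{pmatrix}A_{m-1,i}&B_{m-1,i}\\C_{m-1,i}&D_{m-1,i}\end{pmatrix}\epsilon^{i}$, $\beta_{m}=\begin{pmatrix}0&0\\C_{m,0}&D_{m,0}\end{pmatrix}+\sum_{i\geq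 1}\begin{pmatrix}A_{m,i}&B_{m,i}\\C_{m,i}&D_{m,i}\end{pmatrix}\epsilon^{i}$, with $\det\beta_m$ of exact order $\epsilon^{r}$, i.e. $\det\begin{pmatrix}A_{m,1}&B_{m,1}\\C_{m,0}&D_{m,0}\end{pmatrix}\neq 0$, and $\alpha=\begin{pmatrix}\alpha_{11}&\alpha_{12}\\\alpha_{21}&\alpha_{22}\end{pmatrix}$ independent of $\epsilon$. When $\det D_{m,0}\neq0$ set $S_D(\beta_m)_1:=A_{m,1}-B_{m,1}D_{m,0}^{-1}C_{m,0}\in\mathbb{C}^{r\times r}$ (which is then invertible) and $Z_1:=mD_{m,0}^{-1}-D_{m-1,0}-D_{m,0}-\alpha_{22}-D_{m,0}^{-1}C_{m,0}(B_{m-1,0}+\alpha_{12})$. The matrices $\beta_{m+1},\beta_{m+2}$ are obtained from $\beta_{m-1},\beta_m$ by iterating the equation. *)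

(* Defs.v *)
From HB Require Import structures.
From mathcomp Require Import all_boot all_order all_algebra.
From mathcomp Require Import complex.
From mathcomp Require Import reals.
Set Implicit Arguments. Unset Strict Implicit. Unset Printing Implicit Defensive.
Import Order.TTheory GRing.Theory Num.Theory.
Local Open Scope ring_scope.
Local Open Scope complex_scope.

(* Matrices are N x N with N = r + s, written in blocks (A B; C D) with
   A : r x r, D : s x s.  The scalar field is C = R[i] for a real field R. *)

Definition has_expansion (R : realType) (n : nat)
  (f : R[i] -> 'M[R[i]]_n) (c : nat -> 'M[R[i]]_n) : Prop :=
  forall K : nat, exists Cst : R, exists delta : R, 0 < delta /\
    forall eps : R[i], 0 < `|eps| -> `|eps| < delta%:C ->
      forall i j, `|(f eps - \sum_(k < K) (eps ^+ k) *: c k) i j|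
                  <= Cst%:C * `|eps| ^+ K.

Definition dPI_step (R : realType) (n : nat) (k : nat)
  (alpha bprev bcur : 'M[R[i]]_n) : 'M[R[i]]_n :=
  k%:R *: invmx bcur - bprev - bcur - alpha.

(* Main.v *)
Require Import Defs.
From HB Require Import structures.
From mathcomp Require Import all_boot all_order all_algebra.
From mathcomp Require Import complex.
From mathcomp Require Import reals.
From mathcomp Require Import ring.
Import Order.TTheory GRing.Theory Num.Theory.
Local Open Scope ring_scope.
Local Open Scope complex_scope.
Set Implicit Arguments. Unset Strict Implicit. Unset Printing Implicit Defensive.

Section Asym.
Variable R : realType.
Local Notation C := R[i].

Lemma real_of (x : C) : 0 <= x -> x = (complex.Re x)%:C.
Proof. case: x => a b /ger0_Im /= ->. by []. Qed.

Definition ev (P : C -> Prop) := exists d : R, 0 < d /\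
  forall e : C, 0 < `|e| -> `|e| < d%:C -> P e.

Lemma ev_and P Q : ev P -> ev Q -> ev (fun e => P e /\ Q e).
Proof.
move=> [d1 [d1p H1]] [d2 [d2p H2]]; exists (Num.min d1 d2); split.
  by rewrite lt_min d1p d2p.
move=> e e0 ed; split.
  apply: H1 => //; apply: lt_le_trans ed _; rewrite lecR; by rewrite ge_min lexx.
apply: H2 => //; apply: lt_le_trans ed _; rewrite lecR; by rewrite ge_min lexx orbT.
Qed.

Lemma ev_impl (P Q : C -> Prop) : ev P -> (forall e, P e -> Q e) -> ev Q.
Proof. move=> [d [dp H]] HPQ; exists d; split => // e e0 ed; exact/HPQ/H. Qed.

Lemma ev_lt (x : C) : 0 < x -> ev (fun e => `|e| < x).
Proof.
move=> x0; have xr := real_of (ltW x0).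
exists (complex.Re x); split; first by rewrite -ltcR -xr.
by move=> e _; rewrite -xr.
Qed.

Lemma ev_ne0 : ev (fun e => e != 0).
Proof. exists 1; split => // e; by rewrite normr_gt0. Qed.

Definition nearO (f : C -> C) (l : C) := exists K : C, 0 <= K /\
  ev (fun e => `|f e - l| <= K * `|e|).

Lemma nearO_eq f g l l' : (forall e, f e = g e) -> l = l' -> nearO f l -> nearO g l'.
Proof.
move=> fg <- [K [K0 H]]; exists K; split => //.
by apply: (ev_impl H) => e; rewrite fg.
Qed.

Lemma nearO_ev f g l : ev (fun e => f e = g e) -> nearO f l -> nearO g l.
Proof.
move=> H [K [K0 H2]]; exists K; split => //.
by apply: (ev_impl (ev_and H H2)) => e [<-].
Qed.

Lemma nearO_cst c : nearO (fun _ => c) c.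
Proof.
exists 0; split => //; exists 1; split => // e _ _.
by rewrite subrr normr0 mul0r.
Qed.

Lemma nearO_id : nearO (fun e => e) 0.
Proof.
exists 1; split => //; exists 1; split => // e _ _.
by rewrite subr0 mul1r.
Qed.

Lemma nearO_bound f l : nearO f l -> exists B : C, 0 <= B /\ ev (fun e => `|f e| <= B).
Proof.
move=> [K [K0 H]]; exists (`|l| + K); split; first by rewrite addr_ge0.
apply: (ev_impl (ev_and H (ev_lt (ltr01 : (0:C) < 1)))) => e [H1 H2].
have -> : f e = (f e - l) + l by rewrite subrK.
apply: le_trans (ler_normD _ _) _; rewrite addrC lerD2l.
apply: le_trans H1 _; rewrite -{2}[K]mulr1; apply: ler_wpM2l => //; exact: ltW.
Qed.

Lemma nearO_add f g l m : nearO f l -> nearO g m -> nearO (fun e => f e + g e) (l + m).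
Proof.
move=> [K1 [K10 H1]] [K2 [K20 H2]]; exists (K1 + K2); split; first by rewrite addr_ge0.
apply: (ev_impl (ev_and H1 H2)) => e [e1 e2].
have -> : f e + g e - (l + m) = (f e - l) + (g e - m).
  by rewrite opprD addrACA.
by apply: le_trans (ler_normD _ _) _; rewrite mulrDl lerD.
Qed.

Lemma nearO_opp f l : nearO f l -> nearO (fun e => - f e) (- l).
Proof.
move=> [K [K0 H]]; exists K; split => //.
by apply: (ev_impl H) => e; rewrite -opprD normrN.
Qed.

Lemma nearO_mul f g l m : nearO f l -> nearO g m -> nearO (fun e => f e * g e) (l * m).
Proof.
move=> hf hg; have [B [B0 HB]] := nearO_bound hg.
move: hf hg => [K1 [K10 H1]] [K2 [K20 H2]].
exists (K1 * B + `|l| * K2); split; first by rewrite addr_ge0 // mulr_ge0.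
apply: (ev_impl (ev_and (ev_and H1 H2) HB)) => e [[e1 e2] e3].
have -> : f e * g e - l * m = (f e - l) * g e + l * (g e - m).
  by rewrite mulrBl mulrBr addrA subrK.
apply: le_trans (ler_normD _ _) _; rewrite [X in _ <= X]mulrDl; apply: lerD.
  rewrite normrM mulrAC; apply: ler_pM => //; exact: normr_ge0.
by rewrite normrM -mulrA; apply: ler_wpM2l.
Qed.

Lemma nearO_neq0 f l : nearO f l -> l != 0 -> ev (fun e => `|l| / 2 <= `|f e|).
Proof.
move=> [K [K0 H]] l0.
have lp : 0 < `|l| by rewrite normr_gt0.
have Kp : 0 < 2 * (K + 1) by rewrite mulr_gt0 // ltr_wpDl.
apply: (ev_impl (ev_and H (ev_lt (divr_gt0 lp Kp)))) => e [e1 e2].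
have hK : K * `|e| <= `|l| / 2.
  apply: le_trans (_ : (K + 1) * (`|l| / (2 * (K + 1))) <= _).
    apply: ler_pM; rewrite ?normr_ge0 ?lerDl ?ler01 //; exact: ltW.
  have K1 : K + 1 != 0 by apply: lt0r_neq0; rewrite ltr_wpDl.
  rewrite le_eqVlt; apply/orP; left; apply/eqP; field; rewrite // pnatr_eq0.
have : `|l| <= `|f e| + `|l - f e|.
  by apply: le_trans (ler_normD _ _); rewrite addrC subrK.
rewrite distrC => h.
have : `|l| <= `|f e| + `|l| / 2 by apply: le_trans h _; rewrite lerD2l (le_trans e1).
rewrite -lerBlDr => h2; apply: le_trans h2.
by rewrite {2}[`|l|](splitr `|l|) addrK.
Qed.

Lemma nearO_inv f l : nearO f l -> l != 0 -> nearO (fun e => (f e)^-1) (l^-1).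
Proof.
move=> hf l0; have hb := nearO_neq0 hf l0.
move: hf => [K [K0 H]].
have lp : 0 < `|l| by rewrite normr_gt0.
have lp2 : 0 < `|l| / 2 by rewrite divr_gt0.
have lp3 : 0 < `|l| / 2 * `|l| by rewrite mulr_gt0.
exists (K / (`|l| / 2 * `|l|)); split; first by rewrite divr_ge0 // ltW.
apply: (ev_impl (ev_and H hb)) => e [e1 e2].
have fe0 : f e != 0 by rewrite -normr_gt0; exact: lt_le_trans e2.
have -> : (f e)^-1 - l^-1 = (l - f e) / (f e * l).
  by field; rewrite fe0 l0.
rewrite normrM normfV normrM distrC.
rewrite [X in _ <= X]mulrAC; apply: ler_pM; rewrite ?normr_ge0 ?invr_ge0 ?mulr_ge0 ?normr_ge0 //.
rewrite lef_pV2 ?posrE //; last by rewrite mulr_gt0 // normr_gt0.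
by apply: ler_wpM2r => //; exact: normr_ge0.
Qed.

Lemma nearO_sum (I : Type) (rs : seq I) (P : pred I) (F : I -> C -> C) (L : I -> C) :
  (forall i, nearO (F i) (L i)) ->
  nearO (fun e => \sum_(i <- rs | P i) F i e) (\sum_(i <- rs | P i) L i).
Proof.
move=> hF; elim: rs => [|i rs IH].
  by apply: (nearO_eq _ _ (nearO_cst 0)) => [e|]; rewrite big_nil.
apply: (nearO_eq _ _ (_ : nearO (fun e => if P i then F i e + \big[_/_]_(j <- rs | P j) F j e
                       else \big[_/_]_(j <- rs | P j) F j e) _)) => [e||].
- by rewrite big_cons.
- by rewrite big_cons.
case: (P i) => //; exact: nearO_add.
Qed.

Lemma nearO_prod (I : Type) (rs : seq I) (P : pred I) (F : I -> C -> C) (L : I -> C) :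
  (forall i, nearO (F i) (L i)) ->
  nearO (fun e => \prod_(i <- rs | P i) F i e) (\prod_(i <- rs | P i) L i).
Proof.
move=> hF; elim: rs => [|i rs IH].
  by apply: (nearO_eq _ _ (nearO_cst 1)) => [e|]; rewrite big_nil.
apply: (nearO_eq _ _ (_ : nearO (fun e => if P i then F i e * \big[_/_]_(j <- rs | P j) F j e
                       else \big[_/_]_(j <- rs | P j) F j e) _)) => [e||].
- by rewrite big_cons.
- by rewrite big_cons.
case: (P i) => //; exact: nearO_mul.
Qed.

End Asym.

Section Mat.
Variable R : realType.
Local Notation C := R[i].

Definition mnear m n (f : C -> 'M[C]_(m,n)) (L : 'M[C]_(m,n)) :=
  forall i j, nearO (fun e => f e i j) (L i j).

Lemma mnear_eq m n (f g : C -> 'M[C]_(m,n)) L L' :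
  (forall e, f e = g e) -> L = L' -> mnear f L -> mnear g L'.
Proof. move=> fg <- h i j; apply: (nearO_eq _ _ (h i j)) => // e; by rewrite fg. Qed.

Lemma mnear_ev m n (f g : C -> 'M[C]_(m,n)) L :
  ev (fun e => f e = g e) -> mnear f L -> mnear g L.
Proof.
move=> H h i j; apply: (nearO_ev _ (h i j)).
by apply: (ev_impl H) => e ->.
Qed.

Lemma mnear_cst m n (L : 'M[C]_(m,n)) : mnear (fun _ => L) L.
Proof. move=> i j; exact: nearO_cst. Qed.

Lemma mnear_add m n (f g : C -> 'M[C]_(m,n)) L L' :
  mnear f L -> mnear g L' -> mnear (fun e => f e + g e) (L + L').
Proof.
move=> hf hg i j; apply: (nearO_eq _ _ (nearO_add (hf i j) (hg i j))) => [e|];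
  by rewrite !mxE.
Qed.

Lemma mnear_opp m n (f : C -> 'M[C]_(m,n)) L :
  mnear f L -> mnear (fun e => - f e) (- L).
Proof.
move=> hf i j; apply: (nearO_eq _ _ (nearO_opp (hf i j))) => [e|]; by rewrite !mxE.
Qed.

Lemma mnear_sub m n (f g : C -> 'M[C]_(m,n)) L L' :
  mnear f L -> mnear g L' -> mnear (fun e => f e - g e) (L - L').
Proof. move=> hf hg; exact: mnear_add hf (mnear_opp hg). Qed.

Lemma mnear_scalef m n (k : C -> C) kl (f : C -> 'M[C]_(m,n)) L :
  nearO k kl -> mnear f L -> mnear (fun e => k e *: f e) (kl *: L).
Proof.
move=> hk hf i j; apply: (nearO_eq _ _ (nearO_mul hk (hf i j))) => [e|];
  by rewrite !mxE.
Qed.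

Lemma mnear_scale m n (k : C) (f : C -> 'M[C]_(m,n)) L :
  mnear f L -> mnear (fun e => k *: f e) (k *: L).
Proof. exact: mnear_scalef (nearO_cst k). Qed.

Lemma mnear_mul m n p (f : C -> 'M[C]_(m,n)) (g : C -> 'M[C]_(n,p)) L L' :
  mnear f L -> mnear g L' -> mnear (fun e => f e *m g e) (L *m L').
Proof.
move=> hf hg i j.
apply: (nearO_eq _ _ (nearO_sum (index_enum 'I_n) xpredT
   (F := fun k e => f e i k * g e k j) (L := fun k => L i k * L' k j) _)) => [e||k].
- by rewrite !mxE.
- by rewrite !mxE.
exact: nearO_mul.
Qed.

Lemma mnear_row m n1 n2 (f : C -> 'M[C]_(m,n1)) (g : C -> 'M[C]_(m,n2)) L L' :
  mnear f L -> mnear g L' -> mnear (fun e => row_mx (f e) (g e)) (row_mx L L').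
Proof.
move=> hf hg i j; rewrite -(splitK j); case: (split j) => k /=.
  apply: (nearO_eq _ _ (hf i k)) => [e|]; by rewrite row_mxEl.
apply: (nearO_eq _ _ (hg i k)) => [e|]; by rewrite row_mxEr.
Qed.

Lemma mnear_col m1 m2 n (f : C -> 'M[C]_(m1,n)) (g : C -> 'M[C]_(m2,n)) L L' :
  mnear f L -> mnear g L' -> mnear (fun e => col_mx (f e) (g e)) (col_mx L L').
Proof.
move=> hf hg i j; rewrite -(splitK i); case: (split i) => k /=.
  apply: (nearO_eq _ _ (hf k j)) => [e|]; by rewrite col_mxEu.
apply: (nearO_eq _ _ (hg k j)) => [e|]; by rewrite col_mxEd.
Qed.

Lemma mnear_block m1 m2 n1 n2 (a : C -> 'M[C]_(m1,n1)) (b : C -> 'M[C]_(m1,n2))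
  (c : C -> 'M[C]_(m2,n1)) (d : C -> 'M[C]_(m2,n2)) A B Cm D :
  mnear a A -> mnear b B -> mnear c Cm -> mnear d D ->
  mnear (fun e => block_mx (a e) (b e) (c e) (d e)) (block_mx A B Cm D).
Proof.
move=> ha hb hc hd; apply: mnear_col; exact: mnear_row.
Qed.

Lemma mnear_ul m1 m2 n1 n2 (f : C -> 'M[C]_(m1 + m2, n1 + n2)) L :
  mnear f L -> mnear (fun e => ulsubmx (f e)) (ulsubmx L).
Proof. move=> h i j; apply: (nearO_eq _ _ (h _ _)) => [e|]; by rewrite !mxE. Qed.
Lemma mnear_ur m1 m2 n1 n2 (f : C -> 'M[C]_(m1 + m2, n1 + n2)) L :
  mnear f L -> mnear (fun e => ursubmx (f e)) (ursubmx L).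
Proof. move=> h i j; apply: (nearO_eq _ _ (h _ _)) => [e|]; by rewrite !mxE. Qed.
Lemma mnear_dl m1 m2 n1 n2 (f : C -> 'M[C]_(m1 + m2, n1 + n2)) L :
  mnear f L -> mnear (fun e => dlsubmx (f e)) (dlsubmx L).
Proof. move=> h i j; apply: (nearO_eq _ _ (h _ _)) => [e|]; by rewrite !mxE. Qed.
Lemma mnear_dr m1 m2 n1 n2 (f : C -> 'M[C]_(m1 + m2, n1 + n2)) L :
  mnear f L -> mnear (fun e => drsubmx (f e)) (drsubmx L).
Proof. move=> h i j; apply: (nearO_eq _ _ (h _ _)) => [e|]; by rewrite !mxE. Qed.

Lemma mnear_idM n : mnear (fun e : C => (e%:M : 'M[C]_n)) 0.
Proof.
move=> i j; apply: (nearO_eq (f := fun e => e *+ (i == j)) _ _ _) => [e||]; rewrite ?mxE //.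
case: (i == j).
  by apply: (nearO_eq _ _ (@nearO_id R)) => [e|]; rewrite ?mulr1n ?mulr0n.
by apply: (nearO_eq _ _ (nearO_cst 0)) => [e|]; rewrite ?mulr1n ?mulr0n.
Qed.

Lemma nearO_det n (f : C -> 'M[C]_n) L :
  mnear f L -> nearO (fun e => \det (f e)) (\det L).
Proof.
move=> h; rewrite /determinant.
apply: nearO_sum => s; apply: nearO_mul; first exact: nearO_cst.
apply: nearO_prod => i; exact: h.
Qed.

Lemma mnear_adj n (f : C -> 'M[C]_n) L :
  mnear f L -> mnear (fun e => \adj (f e)) (\adj L).
Proof.
move=> h i j.
apply: (nearO_eq _ _ (nearO_mul (nearO_cst ((-1) ^+ (j + i)))
   (nearO_det (f := fun e => row' j (col' i (f e))) (L := row' j (col' i L)) _))) => [e||].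
- by rewrite !mxE.
- by rewrite !mxE.
move=> k l; apply: (nearO_eq _ _ (h _ _)) => [e|]; by rewrite !mxE.
Qed.

Lemma mnear_inv n (f : C -> 'M[C]_n) L :
  mnear f L -> \det L != 0 -> mnear (fun e => invmx (f e)) (invmx L).
Proof.
move=> h hd.
have hdet := nearO_det h.
have hne := nearO_neq0 hdet hd.
apply: (mnear_ev (f := fun e => (\det (f e))^-1 *: \adj (f e))).
  apply: (ev_impl hne) => e he.
  have dne : \det (f e) != 0.
    by rewrite -normr_gt0; apply: lt_le_trans he; rewrite divr_gt0 // normr_gt0.
  by rewrite /invmx unitmxE unitfE dne.
have -> : invmx L = (\det L)^-1 *: \adj L by rewrite /invmx unitmxE unitfE hd.
apply: mnear_scalef; [exact: nearO_inv | exact: mnear_adj].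
Qed.

End Mat.

Section Alg.
Variable F : fieldType.

Lemma inv_right n (A B : 'M[F]_n) : A *m B = 1%:M -> invmx A = B.
Proof.
move=> h; have [uA _] := mulmx1_unit h.
by rewrite -[invmx A]mulmx1 -h mulmxA mulVmx // mul1mx.
Qed.

Lemma schur r s (A1 : 'M[F]_r) (B1 : 'M[F]_(r,s)) (C0 : 'M[F]_(s,r)) (D0 : 'M[F]_s) :
  D0 \in unitmx -> \det (block_mx A1 B1 C0 D0) != 0 ->
  let D0i := invmx D0 in let SD := A1 - B1 *m D0i *m C0 in
  SD \in unitmx /\
  invmx (block_mx A1 B1 C0 D0) =
    block_mx (invmx SD) (- (invmx SD *m B1 *m D0i)) (- (D0i *m C0 *m invmx SD))
             (D0i + D0i *m C0 *m invmx SD *m B1 *m D0i).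
Proof.
move=> uD hdet D0i SD.
have fact : block_mx A1 B1 C0 D0 =
    block_mx 1%:M (B1 *m D0i) 0 1%:M *m block_mx SD 0 C0 D0.
  rewrite mulmx_block !mul1mx !mulmx0 !mul0mx !add0r ?addr0. 
  by rewrite /SD subrK -mulmxA mulVmx // mulmx1.
have uSD : SD \in unitmx.
  move: hdet; rewrite fact det_mulmx det_ublock det_lblock !det1 mul1r.
  by rewrite mul1r unitmxE unitfE mulf_eq0 negb_or => /andP [].
split => //.
apply: inv_right.
rewrite mulmx_block (@scalar_mx_block _ r s 1); congr block_mx.
- by rewrite mulmxN !mulmxA -mulmxBl mulmxV.
- rewrite mulmxN mulmxDr !mulmxA. 
  rewrite -[A1 *m invmx SD *m B1 *m D0i]mulmxA addrCA [- _ + _]addrC -[B1 *m D0i *m C0 *m invmx SD *m B1 *m D0i]mulmxA -mulmxBl -mulmxBl.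
  by rewrite -opprB -/SD mulNmx mulmxV // mulNmx mul1mx addrN.
- by rewrite mulmxN !mulmxA mulmxV // mul1mx addrN.
- rewrite mulmxN mulmxDr !mulmxA mulmxV // mul1mx.
  by rewrite addrCA addNr addr0.
Qed.


Definition E0 r s : 'M[F]_(r + s) :=
  block_mx (0 : 'M[F]_(r,r)) (0 : 'M[F]_(r,s)) (0 : 'M[F]_(s,r)) (1%:M : 'M[F]_s).

Lemma rsubE r s n (Q : 'M[F]_(r + s, n + s)) :
  rsubmx Q = col_mx (ursubmx Q) (drsubmx Q).
Proof.
apply/matrixP => i j; rewrite -(splitK i); case: (split i) => k /=.
  by rewrite col_mxEu !mxE.
by rewrite col_mxEd !mxE.
Qed.

Lemma QE0 r s (Q : 'M[F]_(r + s)) :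
  Q *m E0 r s = row_mx (0 : 'M_(r + s, r)) (rsubmx Q).
Proof.
rewrite -{1}[Q]hsubmxK /E0 /block_mx mul_row_col !mul_mx_row !mulmx0 mulmx1.
by rewrite add_row_mx addr0 add0r.
Qed.

Lemma E0JE0 r s (J : 'M[F]_(r + s)) :
  E0 r s *m J *m E0 r s = block_mx (0 : 'M_(r,r)) (0 : 'M_(r,s)) (0 : 'M_(s,r)) (drsubmx J).
Proof.
rewrite /E0 -{1}[J]submxK !mulmx_block !mul0mx !mulmx0 !mul1mx !mulmx1 !addr0 !add0r.
by [].
Qed.

Lemma PE0 r s (P : 'M[F]_(r + s)) :
  P *m E0 r s = block_mx (0 : 'M_(r,r)) (ursubmx P) (0 : 'M_(s,r)) (drsubmx P).
Proof.
rewrite /E0 -{1}[P]submxK !mulmx_block !mulmx0 !mulmx1 !addr0 !add0r.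
by [].
Qed.

Lemma H0_lemma r s (m : F) (G Q : 'M[F]_(r + s)) (Z : 'M[F]_s) :
  m != 0 -> G \in unitmx -> drsubmx G \in unitmx -> Z \in unitmx ->
  drsubmx G *m Z = m%:M - (dlsubmx G *m ursubmx Q + drsubmx G *m drsubmx Q) ->
  let H := m *: invmx G - Q *m E0 r s in
  H \in unitmx /\ drsubmx (invmx H) = invmx Z.
Proof.
move=> m0 uG uD uZ hZ H.
set D := drsubmx G; set V := dsubmx G; set U := rsubmx Q.
have hVU : V *m U = m%:M - D *m Z.
  rewrite hZ opprB addrC subrK /U rsubE /V -[dsubmx G]hsubmxK mul_row_col.
  by [].
set K := invmx Z *m invmx D.
have hDZK : D *m Z *m K = 1%:M.
  by rewrite /K mulmxA -[D *m Z *m invmx Z]mulmxA mulmxV // mulmx1 mulmxV.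
set Nm := m^-1 *: (1%:M + U *m K *m V).
have hHG : H *m G = m%:M - U *m V.
  rewrite /H mulmxBl -scalemxAl mulVmx // scalemx1 QE0.
  by rewrite -[G]vsubmxK mul_row_col mul0mx add0r.
have hUV : U *m V *m (U *m K *m V) = m *: (U *m K *m V) - U *m V.
  rewrite !mulmxA -[U *m V *m U]mulmxA hVU mulmxDr mulmxN mul_mx_scalar.
  rewrite !mulmxBl -!scalemxAl; congr (_ - _).
  rewrite !mulmxA -[U *m D *m Z *m invmx Z]mulmxA mulmxV // mulmx1.
  by rewrite -[U *m D *m invmx D]mulmxA mulmxV // mulmx1.
have hN : (m%:M - U *m V) *m Nm = 1%:M.
  rewrite /Nm -scalemxAr mulmxDr mulmx1 mulmxBl mul_scalar_mx hUV.
  by rewrite opprB [m *: _ + _]addrCA subrr addr0 subrK scale_scalar_mx mulVf.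
have uH : H \in unitmx by case: (mulmx1_unit (_ : H *m (G *m Nm) = 1%:M)); rewrite ?mulmxA ?hHG.
split => //.
rewrite (inv_right (_ : H *m (G *m Nm) = 1%:M)); last by rewrite mulmxA hHG.
have -> : drsubmx (G *m Nm) = rsubmx (V *m Nm).
  by rewrite /drsubmx -{1}[G]vsubmxK mul_col_mx col_mxKd.
have -> : V *m Nm = K *m V.
  rewrite /Nm -scalemxAr mulmxDr mulmx1 !mulmxA hVU mulmxBl mul_scalar_mx.
  rewrite -[D *m Z *m invmx Z]mulmxA mulmxV // mulmx1 !mulmxBl -!scalemxAl mulmxV // mul1mx.
  by rewrite addrC subrK scalerA mulVf // scale1r.
rewrite /V -[dsubmx G]hsubmxK mul_mx_row row_mxKr /K -mulmxA mulVmx // mulmx1.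
by []. Qed.

Lemma W0_eq r s (k1 k2 : F) (J Gi P : 'M[F]_(r + s)) :
  k1 *: (E0 r s *m J *m E0 r s) - k2 *: Gi + P *m E0 r s =
  block_mx (- (k2 *: ulsubmx Gi)) (- (k2 *: ursubmx Gi) + ursubmx P)
           (- (k2 *: dlsubmx Gi)) (k1 *: drsubmx J - k2 *: drsubmx Gi + drsubmx P).
Proof.
rewrite E0JE0 PE0 -{1}[Gi]submxK !scale_block_mx opp_block_mx !add_block_mx.
by rewrite !scaler0 !add0r !addr0.
Qed.

End Alg.

Section Main.
Variable R : realType.
Local Notation C := R[i].

Lemma exp0 n (f : C -> 'M[C]_n) c : has_expansion f c -> mnear f (c 0%N).
Proof.
move=> /(_ 1%N) [Cst [d [d0 H]]] i j.
exists (Num.max Cst 0)%:C; split; first by rewrite ler0c le_max lexx orbT.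
exists d; split => // e e0 ed.
have := H e e0 ed i j; rewrite big_ord1 expr0 scale1r expr1 !mxE => h.
apply: le_trans h _; apply: ler_wpM2r; first exact: normr_ge0.
by rewrite lecR le_max lexx.
Qed.

Lemma exp1 n (f : C -> 'M[C]_n) c i j : has_expansion f c -> c 0%N i j = 0 ->
  nearO (fun e => e^-1 * f e i j) (c 1%N i j).
Proof.
move=> /(_ 2%N) [Cst [d [d0 H]]] hc.
exists (Num.max Cst 0)%:C; split; first by rewrite ler0c le_max lexx orbT.
exists d; split => // e e0 ed.
have := H e e0 ed i j; rewrite !big_ord_recr big_ord0 /= expr0 scale1r expr1 add0r => h.
have ne : e != 0 by rewrite -normr_gt0.
have -> : e^-1 * f e i j - c 1%N i j = e^-1 * (f e - (c 0%N + e *: c 1%N)) i j.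
  by rewrite !mxE hc add0r; field.
rewrite normrM normfV.
apply: (le_trans (y := `|e|^-1 * ((Num.max Cst 0)%:C * `|e| ^+ 2))).
  apply: ler_wpM2l; first by rewrite invr_ge0 normr_ge0.
  apply: le_trans h _; apply: ler_wpM2r; first by rewrite exprn_ge0 // normr_ge0.
  by rewrite lecR le_max lexx.
rewrite le_eqVlt; apply/orP; left; apply/eqP.
have hne : `|e| != 0 by rewrite normr_eq0.
by field.
Qed.

Lemma zid (V : zmodType) (a b c p al : V) : a - b - (c - p - b - al) - al = a - c + p.
Proof.
rewrite !opprD !opprK !addrA addrK [_ + b]addrAC [a - b - c]addrAC subrK. by [].
Qed.

Lemma zid2 (V : zmodType) (x a b c d : V) : x - a - b - c - d = x - (d + (a + b + c)).
Proof. by rewrite [d + _]addrC !opprD !addrA. Qed.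

Lemma step_identity r s (m : nat) (e : C) (alpha P B : 'M[C]_(r + s)) :
  e != 0 ->
  let E := block_mx (e%:M : 'M_r) 0 0 (1%:M : 'M_s) in
  let G := block_mx (e^-1 *: ulsubmx B) (e^-1 *: ursubmx B) (dlsubmx B) (drsubmx B) in
  let H := m%:R *: invmx G - (P + B + alpha) *m E in
  G \in unitmx -> H \in unitmx ->
  \det (dPI_step m.+1 alpha B (dPI_step m alpha P B)) =
  e ^- r * \det ((m.+1)%:R *: (E *m invmx H *m E) - m%:R *: invmx G + P *m E).
Proof.
move=> e0 E G H uG uH.
set Ei := block_mx ((e^-1)%:M : 'M_r) 0 0 (1%:M : 'M_s).
have hEEi : E *m Ei = 1%:M.
  rewrite mulmx_block !mulmx0 !mul0mx !addr0 !add0r mulmx1 -scalar_mxM mulfV //.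
  by rewrite scalar_mx_block.
have hEiE : Ei *m E = 1%:M.
  rewrite mulmx_block !mulmx0 !mul0mx !addr0 !add0r mulmx1 -scalar_mxM mulVf //.
  by rewrite scalar_mx_block.
have hB : B = E *m G.
  rewrite mulmx_block !mul0mx ?mulmx0 !addr0 !add0r !mul_scalar_mx !scalerA mulfV //.
  by rewrite !scale1r ?mul1mx submxK.
have invB : invmx B = invmx G *m Ei.
  apply: inv_right; rewrite hB -mulmxA [G *m _]mulmxA mulmxV // mul1mx; exact: hEEi.
have hN : dPI_step m alpha P B = H *m Ei.
  rewrite /dPI_step /H mulmxBl -scalemxAl -mulmxA hEEi mulmx1 invB.
  by rewrite !opprD !addrA.
have invN : invmx (dPI_step m alpha P B) = E *m invmx H.
  apply: inv_right; rewrite hN -mulmxA [Ei *m _]mulmxA hEiE mul1mx mulmxV //.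
have hN2 : dPI_step m.+1 alpha B (dPI_step m alpha P B) =
    ((m.+1)%:R *: (E *m invmx H *m E) - m%:R *: invmx G + P *m E) *m Ei.
  rewrite mulmxDl mulmxBl -!scalemxAl -!mulmxA hEEi !mulmx1.
  rewrite /dPI_step invN -/(dPI_step m alpha P B) hN.
  by rewrite -hN /dPI_step invB zid.
rewrite hN2 det_mulmx /Ei det_ublock det_scalar det1 mulr1 exprVn mulrC.
by [].
Qed.

Lemma ul_zero r s (A : 'M[C]_(r + s)) i j : ulsubmx A = 0 -> A (lshift s i) (lshift s j) = 0.
Proof. by move=> h; have := congr1 (fun M : 'M[C]_r => M i j) h; rewrite !mxE. Qed.
Lemma ur_zero r s (A : 'M[C]_(r + s)) i j : ursubmx A = 0 -> A (lshift s i) (rshift r j) = 0.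
Proof. by move=> h; have := congr1 (fun M : 'M[C]_(r,s) => M i j) h; rewrite !mxE. Qed.

Lemma ursubmxD r s (A B : 'M[C]_(r + s)) : ursubmx (A + B) = ursubmx A + ursubmx B.
Proof. by apply/matrixP => i j; rewrite !mxE. Qed.
Lemma drsubmxD r s (A B : 'M[C]_(r + s)) : drsubmx (A + B) = drsubmx A + drsubmx B.
Proof. by apply/matrixP => i j; rewrite !mxE. Qed.

End Main.

Unset Implicit Arguments.

Theorem lemma3 (R : realType) (r s m : nat) (hr : (0 < r)%N) (hs : (0 < s)%N)
  (hm : (2 <= m)%N)
  (alpha : 'M[R[i]]_(r + s))
  (bprev bcur : R[i] -> 'M[R[i]]_(r + s))
  (cprev ccur : nat -> 'M[R[i]]_(r + s))
  (Hprev : has_expansion bprev cprev)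
  (Hcur : has_expansion bcur ccur)
  (HA0 : ulsubmx (ccur 0%N) = 0) (HB0 : ursubmx (ccur 0%N) = 0)
  (Hdet : \det (block_mx (ulsubmx (ccur 1%N)) (ursubmx (ccur 1%N))
                        (dlsubmx (ccur 0%N)) (drsubmx (ccur 0%N))) != 0)
  (HD : \det (drsubmx (ccur 0%N)) != 0) :
  let A1 := ulsubmx (ccur 1%N) in
  let B1 := ursubmx (ccur 1%N) in
  let C0 := dlsubmx (ccur 0%N) in
  let D0 := drsubmx (ccur 0%N) in
  let Bp0 := ursubmx (cprev 0%N) in
  let Dp0 := drsubmx (cprev 0%N) in
  let D0i := invmx D0 in
  let SD := A1 - B1 *m D0i *m C0 in
  let SDi := invmx SD in
  let Z1 := m%:R *: D0i - Dp0 - D0 - drsubmx alpha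
            - D0i *m C0 *m (Bp0 + ursubmx alpha) in
  \det Z1 != 0 ->
  let M := block_mx (- (m%:R *: SDi))
                    (m%:R *: (SDi *m B1 *m D0i) + Bp0)
                    (m%:R *: (D0i *m C0 *m SDi))
                    ((m.+1)%:R *: invmx Z1 - m%:R *: D0i
                     - m%:R *: (D0i *m C0 *m SDi *m B1 *m D0i) + Dp0) in
  let bnext := fun eps => dPI_step m alpha (bprev eps) (bcur eps) in
  let bnext2 := fun eps => dPI_step m.+1 alpha (bcur eps) (bnext eps) in
  exists Cst : R, exists delta : R, 0 < delta /\
    forall eps : R[i], 0 < `|eps| -> `|eps| < delta%:C ->
      `|\det (bnext2 eps) - eps ^- r * \det M| <= Cst%:C * `|eps| ^- r * `|eps|.
Proof.
move=> A1 B1 C0 D0 Bp0 Dp0 D0i SD SDi Z1 hZ1 M bnext bnext2.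
pose E := fun e : R[i] => block_mx (e%:M : 'M_r) 0 0 (1%:M : 'M_s).
pose G := fun e : R[i] => block_mx (e^-1 *: ulsubmx (bcur e)) (e^-1 *: ursubmx (bcur e))
   (dlsubmx (bcur e)) (drsubmx (bcur e)).
pose Q := fun e => bprev e + bcur e + alpha.
pose H := fun e => m%:R *: invmx (G e) - Q e *m E e.
pose W := fun e => (m.+1)%:R *: (E e *m invmx (H e) *m E e) - m%:R *: invmx (G e)
   + bprev e *m E e.
pose E0' := (@E0 _ r s : 'M[R[i]]_(r + s)).
pose G0 := block_mx A1 B1 C0 D0.
pose Q0 := cprev 0%N + ccur 0%N + alpha.
pose H0 := m%:R *: invmx G0 - Q0 *m E0'.
pose W0 := (m.+1)%:R *: (E0' *m invmx H0 *m E0') - m%:R *: invmx G0 + cprev 0%N *m E0'.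
have hG : mnear G G0.
  apply: mnear_block.
  - move=> i j; apply: (nearO_eq _ _ (exp1 (i := lshift s i) (j := lshift s j) Hcur (ul_zero i j HA0)))
      => [e|]; by rewrite !mxE.
  - move=> i j; apply: (nearO_eq _ _ (exp1 (i := lshift s i) (j := rshift r j) Hcur (ur_zero i j HB0)))
      => [e|]; by rewrite !mxE.
  - exact: mnear_dl (exp0 Hcur).
  - exact: mnear_dr (exp0 Hcur).
have hE : mnear E E0'.
  apply: mnear_block; [exact: mnear_idM | exact: mnear_cst | exact: mnear_cst | exact: mnear_cst].
have hGi : mnear (fun e => invmx (G e)) (invmx G0) := mnear_inv hG Hdet.
have hQ : mnear Q Q0 := mnear_add (mnear_add (exp0 Hprev) (exp0 Hcur)) (mnear_cst alpha).
have hH : mnear H H0 := mnear_sub (mnear_scale m%:R hGi) (mnear_mul hQ hE).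
have uD0 : D0 \in unitmx by rewrite unitmxE unitfE.
have uZ1 : Z1 \in unitmx by rewrite unitmxE unitfE.
have uG0 : G0 \in unitmx by rewrite unitmxE unitfE.
have [uSD hGinv] : _ /\ _ := schur uD0 Hdet.
have mne0 : (m%:R : R[i]) != 0 by rewrite pnatr_eq0 -lt0n (leq_trans _ hm).
have hZ : drsubmx G0 *m Z1 = m%:R%:M - (dlsubmx G0 *m ursubmx Q0 + drsubmx G0 *m drsubmx Q0).
  rewrite /G0 block_mxKdr block_mxKdl /Q0 !ursubmxD !drsubmxD HB0 addr0 -/Bp0 -/Dp0 -/D0.
  rewrite /Z1 !mulmxBr -scalemxAr /D0i mulmxV // scalemx1 !mulmxA mulmxV // mul1mx.
  by rewrite !mulmxDr zid2.
have uDG0 : drsubmx G0 \in unitmx by rewrite /G0 block_mxKdr.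
have [uH0 hJ] : _ /\ _ := H0_lemma mne0 uG0 uDG0 uZ1 hZ.
have hdetH0 : \det H0 != 0 by rewrite -unitfE -unitmxE.
have hW : mnear W W0.
  apply: mnear_add; last exact: mnear_mul (exp0 Hprev) hE.
  apply: mnear_sub; last exact: mnear_scale.
  apply: mnear_scale; apply: (mnear_mul _ hE); apply: (mnear_mul hE).
  exact: mnear_inv hH hdetH0.
have hW0M : W0 = M.
  rewrite /W0 /E0' W0_eq hJ /G0 hGinv block_mxKul block_mxKur block_mxKdl block_mxKdr /M.
  congr block_mx.
  - by rewrite scalerN opprK.
  - by rewrite scalerN opprK.
  - by rewrite scalerDr opprD addrA.
have hdet := nearO_det hW.
rewrite hW0M in hdet.
have evG := nearO_neq0 (nearO_det hG) Hdet.
have evH := nearO_neq0 (nearO_det hH) hdetH0.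
case: hdet => K [K0 hK].
have [d [d0 hd]] := ev_and (ev_and hK (@ev_ne0 R)) (ev_and evG evH).
exists (complex.Re K), d; split => // e e0 ed.
have [[h1 ne] [h2 h3]] := hd e e0 ed.
have dG : \det (G e) != 0.
  by rewrite -normr_gt0; apply: lt_le_trans h2; rewrite divr_gt0 // normr_gt0.
have dH : \det (H e) != 0.
  by rewrite -normr_gt0; apply: lt_le_trans h3; rewrite divr_gt0 // normr_gt0.
have uG : G e \in unitmx by rewrite unitmxE unitfE.
have uH : H e \in unitmx by rewrite unitmxE unitfE.
have -> : \det (bnext2 e) = e ^- r * \det (W e).
  rewrite /bnext2 /bnext /W /H /Q /G /E. exact: (step_identity (m := m) (alpha := alpha) (P := bprev e) (B := bcur e) ne uG uH).
rewrite -(real_of K0) -mulrBr normrM normfV normrX [K * _]mulrC -mulrA.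
by apply: ler_wpM2l => //; rewrite invr_ge0 exprn_ge0 // normr_ge0.
Qed.
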